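(* Let $M$ and $M'$ be as described in the context, with initial-state distribution $\rho$ and horizon $T$. If $\pi'_*$ is an optimal policy on $M'$, i.e. $V'_{\pi'_*}(\rho)\ge V'_{\pi'}(\rho)$ for every policy $\pi'$ on $M'$, then $\phi(\pi'_* )$ is an optimal policy on $M$, i.e. $V_{\phi(\pi'_* )}(\rho)\ge V_{\pi}(\rho)$ for every policy $\pi$ on $M$.
   Context: Fix integers $n\ge 1$ (agents/radars), $m\ge 1$ (targets), a horizon $T\ge 1$, and write $[m]=\{1,\dots,m\}$ and $\dagger$ for an extra ''stop'' symbol not in $[m]$. Let $S$ be a finite state space, $\rho$ a probability distribution on $S$, $\Omega_1,\dots,\Omega_n$ finite individual observation sets, $O(\omega\mid s)$ a probability distribution on $\Omega_1\times\dots\times\Omega_n$ for each $s\in S$, $P(s,\varepsilon,\cdot)$ a probability distribution on $S$ for each $s\in S$ and joint action $\varepsilon=(\varepsilon_1,\dots,\varepsilon_n)\in\mathcal P([m])^n$, and $R:S\times\mathcal P([m])^n\times S\to\mathbb R$ a reward function. The original Dec-POMDP $M$: agent $j$'s action is a subset $\varepsilon_j\subseteq[m]$. A policy on $M$ is $\pi=(\pi_1,\dots,\pi_n)$ with each $\pi_j(\cdot\mid\omega_j)$ a probability distribution on $\mathcal P([m])$ for each $\omega_j\in\Omega_j$. Dynamics: $s_0\sim\rho$; at each step $t=0,\dots,T-1$, $\omega_t=(\omega_{t,1},\dots,\omega_{t,n})\sim O(\cdot\mid s_t)$, each agent independently draws $\varepsilon_{t,j}\sim\pi_j(\cdot\mid\omega_{t,j})$,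 then $s_{t+1}\sim P(s_t,\varepsilon_t,\cdot)$ and reward $R(s_t,\varepsilon_t,s_{t+1})$ is received. $V_\pi(\rho)=\mathbb E\big[\sum_{t=0}^{T-1}R(s_t,\varepsilon_t,s_{t+1})\big]$. The sequential-choice Dec-POMDP $M'$: a policy on $M'$ is $\pi'=(\pi'_1,\dots,\pi'_n)$ where, for each $\omega_j\in\Omega_j$ and $E\subseteq[m]$, $\pi'_j(\cdot\mid\omega_j,E)$ is a probability distribution on $([m]\setminus E)\cup\{\dagger\}$. Dynamics: $s_0\sim\rho$; each round $t=0,\dots,T-1$: an observation $\omega_t\sim O(\cdot\mid s_t)$ is drawn and stays fixed during the round; all selections $\varepsilon_j$ start at $\varnothing$ and no agent is finished. At each micro-step every unfinished agent $j$ independently draws $a_j\sim\pi'_j(\cdot\mid\omega_{t,j},\varepsilon_j)$; if $a_j\in[m]$ then $\varepsilon_j\leftarrow\varepsilon_j\cup\{a_j\}$, if $a_j=\dagger$ agent $j$ becomes finished; the underlying state does not change and reward $0$ is received. When all agents are finished with selections $\varepsilon=(\varepsilon_1,\dots,\varepsilon_n)$, $s_{t+1}\sim P(s_t,\varepsilon,\cdot)$, reward $R(s_t,\varepsilon,s_{t+1})$ is received, and selections are reset to $\varnothing$. $V'_{\pi'}(\rho)$ is the expected total reward over the $T$ rounds. Policy transposition: for a policy $\pi'$ on $M'$, $\phi(\pi')$ is the policy on $M$ with, for each agent $j$, $\omega\in\Omega_j$ and $\varepsilon\subseteq[m]$ with $|\varepsilon|=p$, \[\phi_j(\pi')(\varepsilon\mid\omega)=\sum_{(i_1,\dots,i_p)}\Big(\prod_{l=0}^{p-1}\pi'_j\big(i_{l+1}\mid\omega,\{i_1,\dots,i_l\}\big)\Big)\,\pi'_j(\dagger\mid\omega,\varepsilon),\]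 where the sum ranges over all $p!$ orderings $(i_1,\dots,i_p)$ of the elements of $\varepsilon$ (for $\varepsilon=\varnothing$ this is $\pi'_j(\dagger\mid\omega,\varnothing)$). *)

(* Defs.v *)
From HB Require Import structures.
From mathcomp Require Import all_boot all_order all_algebra.
Set Implicit Arguments. Unset Strict Implicit. Unset Printing Implicit Defensive.
Import Order.TTheory GRing.Theory Num.Theory.
Local Open Scope ring_scope.

(* Conventions: agents are 'I_n, targets [m] are 'I_m, the stop symbol
   dagger is [None : option 'I_m] (targets i are [Some i]). *)

Section DecPOMDP.
Variable R : realFieldType.
Variables (n m : nat) (S : finType) (Om : 'I_n -> finType).

Definition jobs := {dffun forall j : 'I_n, Om j}.
Definition jact := {ffun 'I_n -> {set 'I_m}}.

Definition is_distr (T : finType) (p : T -> R) :=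
  (forall x, 0 <= p x) /\ \sum_x p x = 1.

Definition policyM := forall j : 'I_n, Om j -> {set 'I_m} -> R.
Definition valid_policyM (pi : policyM) := forall j w, is_distr (pi j w).

(* policies on M': pi' j w E is a distribution on ([m] \ E) u {dagger} *)
Definition policyM' := forall j : 'I_n, Om j -> {set 'I_m} -> option 'I_m -> R.
Definition valid_policyM' (pi' : policyM') :=
  forall j w E, is_distr (pi' j w E) /\ (forall i, i \in E -> pi' j w E (Some i) = 0).

Variables (O : S -> jobs -> R) (P : S -> jact -> S -> R) (Rw : S -> jact -> S -> R).

(* expected reward over k remaining rounds from state s, given the
   distribution sel w e of the joint action e chosen in a round where the
   joint observation is w *)
Fixpoint value_from (sel : jobs -> jact -> R) (k : nat) (s : S) : R :=
  match k with
  | 0 => 0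
  | k'.+1 => \sum_(w : jobs) O s w * \sum_(e : jact) sel w e *
               \sum_(s' : S) P s e s' * (Rw s e s' + value_from sel k' s')
  end.

Definition V_M (rho : S -> R) (T : nat) (pi : policyM) : R :=
  \sum_(s : S) rho s * value_from (fun w e => \prod_(j : 'I_n) pi j (w j) (e j)) T s.

(* M' : micro-states of a round: for each agent its current selection and
   whether it is finished *)
Definition mstate := {ffun 'I_n -> {set 'I_m} * bool}.

Definition agent_step (pi' : policyM') (j : 'I_n) (w : Om j)
    (x y : {set 'I_m} * bool) : R :=
  if x.2 then (y == x)%:R
  else \sum_(a : option 'I_m) pi' j w x.1 a *
         (y == match a with Some i => (i |: x.1, false) | None => (x.1, true) end)%:R.

Definition micro_step (pi' : policyM') (w : jobs) (x y : mstate) : R :=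
  \prod_(j : 'I_n) agent_step pi' (w j) (x j) (y j).

Fixpoint micro_dist (pi' : policyM') (w : jobs) (k : nat) (y : mstate) : R :=
  match k with
  | 0 => (y == [ffun _ => (set0, false)])%:R
  | k'.+1 => \sum_(x : mstate) micro_dist pi' w k' x * micro_step pi' w x y
  end.

(* distribution of the final joint selection of a round; every agent is
   finished after at most m+1 micro-steps (each micro-step of an unfinished
   agent adds a new target or stops it), so we run m+1 micro-steps. *)
Definition round_dist (pi' : policyM') (w : jobs) (e : jact) : R :=
  \sum_(x : mstate | [forall j, (x j).2 && ((x j).1 == e j)]) micro_dist pi' w m.+1 x.

Definition V_M' (rho : S -> R) (T : nat) (pi' : policyM') : R :=
  \sum_(s : S) rho s * value_from (round_dist pi') T s.

Fixpoint ord_prob (pi' : policyM') (j : 'I_n) (w : Om j) (E : {set 'I_m})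
    (s : seq 'I_m) : R :=
  match s with
  | [::] => pi' j w E None
  | i :: s' => pi' j w E (Some i) * ord_prob pi' w (i |: E) s'
  end.

Definition phi (pi' : policyM') : policyM :=
  fun j w e => \sum_(s <- permutations (enum e)) ord_prob pi' w set0 s.

End DecPOMDP.

(* Main.v *)
Require Import Defs.
From HB Require Import structures.
From mathcomp Require Import all_boot all_order all_algebra.
Set Implicit Arguments. Unset Strict Implicit. Unset Printing Implicit Defensive.
Import Order.TTheory GRing.Theory Num.Theory.
Local Open Scope ring_scope.

Lemma big_option_sum (R : nmodType) (T : finType) (F : option T -> R) :
  \sum_(a : option T) F a = F None + \sum_(i : T) F (Some i).
Proof.
have pe : perm_eq (index_enum (option T)) (None :: map Some (index_enum T)).
  apply: uniq_perm; first exact: index_enum_uniq.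
    rewrite /= (map_inj_uniq (@Some_inj _)) index_enum_uniq andbT.
    by apply/mapP => -[].
  by case=> [x|]; rewrite !mem_index_enum //= inE /= (mem_map (@Some_inj _)) mem_index_enum.
by rewrite (perm_big _ pe) big_cons big_map.
Qed.
Section Agent.
Variables (R : realFieldType) (m : nat).
Variable q : {set 'I_m} -> option 'I_m -> R.
Hypothesis q0 : forall (E : {set 'I_m}) (i : 'I_m), i \in E -> q E (Some i) = 0.

Fixpoint pp (E : {set 'I_m}) (s : seq 'I_m) : R :=
  match s with [::] => 1 | i :: s' => q E (Some i) * pp (i |: E) s' end.
Fixpoint oprob (E : {set 'I_m}) (s : seq 'I_m) : R :=
  match s with [::] => q E None | i :: s' => q E (Some i) * oprob (i |: E) s' end.

Lemma oprobE (E : {set 'I_m}) (s : seq 'I_m) : oprob E s = pp E s * q (E :|: [set x in s]) None.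
Proof.
elim: s E => [|i s IH] E /=.
  by rewrite mul1r; congr q; apply/setP=> x; rewrite !inE orbF.
rewrite IH mulrA; congr (_ * q _ _); apply/setP=> x; rewrite !inE.
by case: (x == i); rewrite ?orbT //= orbF.
Qed.

Lemma pp_rcons (E : {set 'I_m}) (s : seq 'I_m) (i : 'I_m) : pp E (rcons s i) = pp E s * q (E :|: [set x in s]) (Some i).
Proof.
elim: s E => [|j s IH] E /=.
  by rewrite mul1r mulr1; congr q; apply/setP=> x; rewrite !inE orbF.
rewrite IH mulrA; congr (_ * q _ _); apply/setP=> x; rewrite !inE.
by case: (x == j); rewrite ?orbT //= orbF.
Qed.

Lemma pp0 (E : {set 'I_m}) (s : seq 'I_m) : ~~ uniq s || has (fun x => x \in E) s -> pp E s = 0.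
Proof.
elim: s E => [|i s IH] E //=.
case iE: (i \in E); first by rewrite q0 ?mul0r.
rewrite /= negb_and negbK => H; rewrite IH ?mulr0 //.
case/orP: H => [/orP[h1|h1]|h1].
- by apply/orP; right; apply/hasP; exists i => //; rewrite !inE eqxx.
- by rewrite h1.
- apply/orP; right; move/hasP: h1 => [x xs xE]; apply/hasP; exists x => //.
  by rewrite !inE xE orbT.
Qed.

Definition astep (x y : {set 'I_m} * bool) : R :=
  if x.2 then (y == x)%:R
  else \sum_(a : option 'I_m) q x.1 a *
         (y == match a with Some i => (i |: x.1, false) | None => (x.1, true) end)%:R.

Fixpoint adist (k : nat) (y : {set 'I_m} * bool) : R :=
  match k with
  | 0 => (y == (set0, false))%:R
  | k'.+1 => \sum_x adist k' x * astep x y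
  end.

Fixpoint allseq (k : nat) : seq (seq 'I_m) :=
  match k with
  | 0 => [:: [::]]
  | k'.+1 => [seq rcons s i | s <- allseq k', i <- index_enum 'I_m]
  end.

Lemma mem_allseq k (s : seq 'I_m) : (s \in allseq k) = (size s == k).
Proof.
elim: k s => [|k IH] s /=; first by rewrite inE; case: s.
apply/allpairsP/idP => [[[s' i] /= [s'in _ ->]]|].
  by rewrite size_rcons eqSS -IH.
case/lastP: s => [//|s i]; rewrite size_rcons eqSS => H.
by exists (s, i); rewrite IH mem_index_enum.
Qed.

Lemma allseq_uniq k : uniq (allseq k).
Proof.
elim: k => [|k IH] //=.
apply: allpairs_uniq => //; first exact: index_enum_uniq.
by move=> [s i] [s' i'] _ _ /= /rcons_inj.
Qed.

Lemma sum_ind (T : finType) (a : T) (f : T -> R) :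
  \sum_(x : T) (a == x)%:R * f x = f a.
Proof.
rewrite (bigD1 a) //= eqxx mul1r big1 ?addr0 // => x xa.
by rewrite eq_sym (negbTE xa) mul0r.
Qed.

Lemma sum_pair (T1 T2 : finType) (f : T1 * T2 -> R) :
  \sum_(x : T1 * T2) f x = \sum_(a : T1) \sum_(b : T2) f (a, b).
Proof. by rewrite pair_bigA; apply: eq_bigr => -[]. Qed.

Lemma adist_false k (F : {set 'I_m}) :
  adist k (F, false) = \sum_(s <- allseq k) ([set x in s] == F)%:R * pp set0 s.
Proof.
elim: k F => [|k IH] F /=.
  rewrite big_cons big_nil addr0 mulr1 xpair_eqE andbT; congr (_%:R).
  by rewrite eq_sym; congr (_ == _); apply/setP=> x; rewrite !inE.
rewrite sum_pair.
transitivity (\sum_E adist k (E, false) * \sum_i q E (Some i) * (F == i |: E)%:R).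
  apply: eq_bigr => E _; rewrite big_bool /astep /= xpair_eqE andbF mulr0 add0r.
  rewrite big_option_sum /= xpair_eqE andbF mulr0 add0r; congr (_ * _).
  by apply: eq_bigr => i _; rewrite xpair_eqE andbT.
rewrite (eq_bigr (fun E => \sum_(s <- allseq k) ([set x in s] == E)%:R * pp set0 s * \sum_i q E (Some i) * (F == i |: E)%:R)); last by move=> E _; rewrite IH big_distrl.
rewrite exchange_big /= big_allpairs_dep /=.
apply: eq_bigr => s _.
rewrite (eq_bigr (fun E => ([set x in s] == E)%:R * (pp set0 s * \sum_i q E (Some i) * (F == i |: E)%:R))); last first.
  by move=> E _; rewrite mulrA.
rewrite sum_ind big_distrr; apply: eq_bigr => i _.
rewrite pp_rcons set0U.
have -> : [set x in rcons s i] = i |: [set x in s].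
  by apply/setP=> x; rewrite !inE mem_rcons inE.
by rewrite /= eq_sym mulrA mulrC.
Qed.

Lemma adist_true k (F : {set 'I_m}) :
  adist k (F, true) = \sum_(l < k) adist l (F, false) * q F None.
Proof.
elim: k => [|k IH] /=; first by rewrite big_ord0 eqE /= andbF.
rewrite big_ord_recr /= -IH.
rewrite sum_pair.
rewrite (eq_bigr (fun E => (E == F)%:R * adist k (F, true) + (F == E)%:R * (adist k (E, false) * q E None))); last first.
  move=> E _; rewrite big_bool /astep /= big_option_sum /= xpair_eqE andbT.
  rewrite big1 ?addr0; last by move=> i _; rewrite xpair_eqE andbF mulr0.
  by case: (eqVneq E F) => [->|ne]; rewrite /= ?mulr1 ?mul1r ?mulr0 ?mul0r ?addr0.
rewrite big_split /= sum_ind; congr (_ + _).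
by rewrite (eq_bigr (fun E => (F == E)%:R * adist k (F, true))) ?sum_ind // => E _; rewrite eq_sym; case: eqP => [->|]; rewrite ?mul0r.
Qed.

Lemma mem_perm_enum (e : {set 'I_m}) (s : seq 'I_m) :
  (s \in permutations (enum e)) = [&& uniq s, [set x in s] == e & size s == #|e|].
Proof.
rewrite mem_permutations; apply/idP/idP.
  move=> pe; have u : uniq s by rewrite (perm_uniq pe) enum_uniq.
  rewrite u /= (perm_size pe) -cardE eqxx andbT.
  by apply/eqP/setP => x; rewrite inE (perm_mem pe) mem_enum.
case/and3P => u /eqP se _; apply: uniq_perm => //; first exact: enum_uniq.
by move=> x; rewrite mem_enum -se inE.
Qed.

Lemma allseq_sum l (e : {set 'I_m}) :
  \sum_(s <- allseq l) ([set x in s] == e)%:R * pp set0 s =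
  (l == #|e|)%:R * \sum_(s <- permutations (enum e)) pp set0 s.
Proof.
transitivity (\sum_(s <- allseq l | uniq s && ([set x in s] == e)) pp set0 s).
  rewrite [RHS]big_mkcond; apply: eq_bigr => s _.
  case u: (uniq s); case: ([set x in s] == e); rewrite /= ?mul1r ?mul0r //.
  by rewrite pp0 // u.
case: (eqVneq l #|e|) => [le|ne].
  rewrite mul1r -big_filter; apply: perm_big; apply: uniq_perm.
  - by rewrite filter_uniq // allseq_uniq.
  - exact: permutations_uniq.
  by move=> s; rewrite mem_filter mem_allseq mem_perm_enum le andbA.
rewrite mul0r big1_seq // => s /andP [/andP [u /eqP se]]; rewrite mem_allseq => /eqP sl.
move: ne; rewrite -se cardsE -sl; move/card_uniqP: u => ->.
by rewrite eqxx.
Qed.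

Lemma adist_final (e : {set 'I_m}) :
  adist m.+1 (e, true) = \sum_(s <- permutations (enum e)) oprob set0 s.
Proof.
rewrite adist_true.
rewrite (eq_bigr (fun l : 'I_m.+1 => ((l : nat) == #|e|)%:R *
   ((\sum_(s <- permutations (enum e)) pp set0 s) * q e None))); last first.
  by move=> l _; rewrite adist_false allseq_sum -mulrA.
have lt : (#|e| < m.+1)%N by rewrite ltnS; apply: leq_trans (max_card _) _; rewrite card_ord.
rewrite (bigD1 (Ordinal lt)) //= eqxx mul1r [X in _ + X]big1 ?addr0; last first.
  move=> l ne; case: (eqVneq (l : nat) #|e|) => [le|]; rewrite ?mul0r //.
  by move: ne; rewrite -val_eqE /= le eqxx.
rewrite big_distrl /=; apply: eq_big_seq => s.
rewrite mem_perm_enum => /and3P [_ /eqP se _].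
by rewrite oprobE set0U se.
Qed.
End Agent.

Section Construct.
Variables (R : realFieldType) (m : nat).
Variable p : {set 'I_m} -> R.
Hypothesis p_ge0 : forall E, 0 <= p E.
Hypothesis p_sum : \sum_E p E = 1.

Definition ltord (x y : 'I_m) := (x < y)%N.
Lemma ltord_trans : transitive ltord.
Proof. by move=> y x z; rewrite /ltord; apply: ltn_trans. Qed.

Definition ext (E F : {set 'I_m}) :=
  (E \subset F) && [forall x in F :\: E, [forall y in E, (y < x)%N]].
Definition cnd (E : {set 'I_m}) (i : 'I_m) :=
  (i \notin E) && [forall y in E, (y < i)%N].
Definition g (E : {set 'I_m}) : R := \sum_F (ext E F)%:R * p F.
Definition qc (E : {set 'I_m}) (a : option 'I_m) : R :=
  if g E == 0 then (a == None)%:R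
  else match a with None => p E / g E | Some i => (cnd E i)%:R * g (i |: E) / g E end.

Lemma g_ge0 E : 0 <= g E.
Proof. by apply: sumr_ge0 => F _; rewrite mulr_ge0 ?ler0n. Qed.

Lemma ext_refl E : ext E E.
Proof. by rewrite /ext subxx /=; apply/forallP => x; rewrite setDv inE. Qed.

Lemma ext_step E i F : cnd E i -> ext (i |: E) F -> ext E F.
Proof.
move=> /andP [iE /forallP Ei] /andP [sub /forallP H]; apply/andP; split.
  by apply: subset_trans sub; apply/subsetP => x xE; rewrite !inE xE orbT.
apply/forallP => x; apply/implyP => /setDP [xF xE].
apply/forallP => y; apply/implyP => yE.
case: (eqVneq x i) => [->|xi]; first exact: (implyP (Ei y)) yE.
have : x \in F :\: (i |: E) by rewrite !inE (negbTE xi) (negbTE xE) xF.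
by move/(implyP (H x))/forallP/(_ y)/implyP; apply; rewrite !inE yE orbT.
Qed.

Lemma count_ext E F :
  \sum_i ((cnd E i && ext (i |: E) F) : nat)%:R = ((ext E F && (F != E)) : nat)%:R :> R.
Proof.
case h: (ext E F && (F != E)); last first.
  apply: big1 => j _; case c: (cnd E j && ext (j |: E) F) => //.
  move/andP: c => [c e]; move: h; rewrite (ext_step c e) /=.
  move/andP: e => [/subsetP sub _]; move/andP: c => [jE _].
  have jF : j \in F by apply: sub; rewrite !inE eqxx.
  by case: eqP => // FE; move: jE; rewrite -FE jF.
move/andP: h => [/andP [sub /forallP H] ne].
have : F :\: E != set0.
  rewrite setD_eq0; apply: contra ne => FE; rewrite eqEsubset FE; exact: sub.
case/set0Pn => x0 x0in.
case: (arg_minnP (fun i : 'I_m => nat_of_ord i) x0in) => i0 i0in i0min.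
have c0 : cnd E i0 && ext (i0 |: E) F.
  move/setDP: (i0in) => [i0F i0E].
  apply/andP; split; first by rewrite /cnd i0E /=; exact: (implyP (H i0) i0in).
  apply/andP; split.
    by apply/subsetP => x; rewrite !inE => /orP [/eqP ->|xE] //; apply: (subsetP sub).
  apply/forallP => x; apply/implyP; rewrite !inE negb_or => /andP [/andP [xi xE] xF].
  apply/forallP => y; apply/implyP; rewrite !inE => /orP [/eqP ->|yE].
    have xin : x \in F :\: E by rewrite !inE xE xF.
    rewrite ltn_neqAle (i0min x xin) andbT.
    by rewrite eq_sym; apply: contra xi => /eqP/val_inj ->.
  have : x \in F :\: E by rewrite !inE xE xF.
  by move/(implyP (H x))/forallP/(_ y)/implyP; apply.
rewrite (bigD1 i0) //= c0 big1 ?addr0 // => j nj.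
case c: (cnd E j && ext (j |: E) F) => //; exfalso.
move/andP: c => [/andP [jE _] /andP [subj /forallP Hj]].
have jF : j \in F by apply: (subsetP subj); rewrite !inE eqxx.
have : i0 \in F :\: (j |: E).
  move/setDP: i0in => [i0F i0E]; rewrite !inE i0F (negbTE i0E) andbT orbF.
  by rewrite eq_sym.
move/(implyP (Hj i0))/forallP/(_ j)/implyP; rewrite !inE eqxx => /(_ isT) lt.
have jin : j \in F :\: E by rewrite !inE jE jF.
have := i0min j jin.
by rewrite leqNgt lt.
Qed.

Lemma g_split E : g E = p E + \sum_i (cnd E i)%:R * g (i |: E).
Proof.
rewrite {1}/g (bigD1 E) //= ext_refl mul1r; congr (_ + _).
transitivity (\sum_F (\sum_i ((cnd E i && ext (i |: E) F) : nat)%:R) * p F).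
  rewrite big_mkcond; apply: eq_bigr => F _.
  rewrite count_ext; case: (ext E F); case: eqP => //= _; by rewrite mul0r.
rewrite (eq_bigr (fun F => \sum_i ((cnd E i && ext (i |: E) F) : nat)%:R * p F)); last first.
  by move=> F _; rewrite big_distrl.
rewrite exchange_big; apply: eq_bigr => i _.
rewrite /g big_distrr; apply: eq_bigr => F _.
by rewrite /= mulrA -natrM mulnb.
Qed.

Lemma g_mono E i : cnd E i -> g (i |: E) <= g E.
Proof.
move=> c; apply: ler_sum => F _; apply: ler_wpM2r => //.
by case e: (ext (i |: E) F); rewrite ?ler0n // (ext_step c e).
Qed.

Lemma p_le_g E : p E <= g E.
Proof.
rewrite g_split lerDl; apply: sumr_ge0 => i _.
by rewrite mulr_ge0 ?ler0n ?g_ge0.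
Qed.

Lemma g0 : g set0 = 1.
Proof.
rewrite /g -[RHS]p_sum; apply: eq_bigr => F _.
have -> : ext set0 F by rewrite /ext sub0set; apply/forallP => x; apply/implyP => _; apply/forallP => y; rewrite inE.
by rewrite /= mul1r.
Qed.

Lemma qc_ge0 E a : 0 <= qc E a.
Proof.
rewrite /qc; case: ifP => _; first exact: ler0n.
by case: a => [i|]; rewrite ?divr_ge0 ?mulr_ge0 ?ler0n ?g_ge0.
Qed.

Lemma qc_sum E : \sum_a qc E a = 1.
Proof.
rewrite big_option_sum /qc; case: ifP => gE.
  by rewrite eqxx big1 ?addr0.
rewrite -big_distrl /= -mulrDl -g_split divff //; exact/negbT.
Qed.

Lemma qc0 (E : {set 'I_m}) (i : 'I_m) : i \in E -> qc E (Some i) = 0.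
Proof.
by move=> iE; rewrite /qc /cnd iE /=; case: ifP => _; rewrite ?mul0r.
Qed.

Lemma pp_nz (E : {set 'I_m}) (s : seq 'I_m) : pp qc E s != 0 ->
  sorted ltord s /\ (forall y, y \in E -> all (fun x : 'I_m => (y < x)%N) s).
Proof.
elim: s E => [|i s IH] E /=; first by [].
rewrite mulf_eq0 negb_or => /andP [qnz /IH [srt H]].
have c : cnd E i.
  case c: (cnd E i) => //; move: qnz; rewrite /qc c.
  by case: ifP => _ /=; rewrite ?mul0r ?eqxx.
move/andP: c => [iE /forallP Ei].
split.
  rewrite (path_sortedE ltord_trans) srt andbT.
  by apply: H; rewrite !inE eqxx.
move=> y yE; rewrite (implyP (Ei y) yE) /=.
by apply: H; rewrite !inE yE orbT.
Qed.

Lemma pp_sorted (s : seq 'I_m) : sorted ltord s -> pp qc set0 s = g [set x in s].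
Proof.
elim/last_ind: s => [|s i IH].
  by move=> _ /=; rewrite -g0; congr g; apply/setP => x; rewrite !inE.
rewrite (sorted_pairwise ltord_trans) pairwise_rcons -(sorted_pairwise ltord_trans).
move=> /andP [alli srt].
rewrite pp_rcons set0U IH //.
have -> : [set x in rcons s i] = i |: [set x in s].
  by apply/setP=> x; rewrite !inE mem_rcons inE.
have c : cnd [set x in s] i.
  apply/andP; split.
    rewrite inE; apply/negP => is'; move/allP: alli => /(_ i is').
    by rewrite /ltord ltnn.
  apply/forallP => y; apply/implyP; rewrite inE => ys.
  by move/allP: alli => /(_ y ys).
rewrite /qc; case: ifP => [/eqP gE|gE].
  rewrite gE mul0r; apply/eqP; rewrite eq_le g_ge0 /= -gE.
  exact: g_mono.
by rewrite c mul1r mulrCA divff ?mulr1 //; exact/negbT.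
Qed.

Lemma enum_sorted (e : {set 'I_m}) : sorted ltord (enum e).
Proof.
rewrite /enum_mem -enumT; apply: (sorted_filter ltord_trans).
have := iota_ltn_sorted 0 m; rewrite -val_enum_ord sorted_map.
by [].
Qed.

Lemma phi_qc (e : {set 'I_m}) :
  \sum_(s <- permutations (enum e)) oprob qc set0 s = p e.
Proof.
rewrite (bigD1_seq (enum e)) /=; last exact: permutations_uniq.
  2: by rewrite mem_permutations perm_refl.
rewrite big1_seq ?addr0; last first.
  move=> s /andP [ne sin]; rewrite oprobE.
  case: (eqVneq (pp qc set0 s) 0) => [->|nz]; first by rewrite mul0r.
  have [srt _] := pp_nz nz.
  move: ne; rewrite mem_permutations in sin.
  rewrite (irr_sorted_eq ltord_trans _ srt (enum_sorted e)) ?eqxx //.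
    by move=> x; rewrite /ltord ltnn.
  exact: perm_mem.
rewrite oprobE pp_sorted ?enum_sorted // set0U.
have -> : [set x in enum e] = e by apply/setP => x; rewrite inE mem_enum.
rewrite /qc; case: ifP => [/eqP gE|gE].
  rewrite gE mul0r; apply/eqP; rewrite eq_le p_ge0 /= -gE; exact: p_le_g.
by rewrite mulrCA divff ?mulr1 //; exact/negbT.
Qed.

End Construct.

Section Connect.
Variables (R : realFieldType) (n m : nat) (S : finType) (Om : 'I_n -> finType).

Lemma micro_prod (pi' : policyM' R m Om) (w : jobs Om) k (y : mstate n m) :
  micro_dist pi' w k y = \prod_j adist (pi' j (w j)) k (y j).
Proof.
elim: k y => [|k IH] y /=.
  case: (eqVneq y [ffun _ => (set0, false)]) => [->|ne].
    by rewrite big1 // => j _; rewrite ffunE eqxx.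
  have : ~~ [forall j, y j == (set0, false)].
    apply: contra ne => /forallP H; apply/eqP/ffunP => j; rewrite ffunE; apply/eqP/H.
  by move/forallPn => [j nj]; rewrite (bigD1 j) //= (negbTE nj) mul0r.
rewrite bigA_distr_bigA; apply: eq_bigr => x _.
by rewrite IH -big_split.
Qed.

Lemma round_prod (pi' : policyM' R m Om) (w : jobs Om) (e : jact n m) :
  round_dist pi' w e = \prod_j adist (pi' j (w j)) m.+1 (e j, true).
Proof.
rewrite /round_dist (big_pred1 [ffun j => (e j, true)]).
  by rewrite micro_prod; apply: eq_bigr => j _; rewrite ffunE.
move=> x /=; apply/forallP/eqP => [H|->].
  by apply/ffunP => j; rewrite ffunE; move: (H j); case: (x j) => a b /= /andP [-> /eqP ->].
by move=> j; rewrite ffunE /= eqxx.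
Qed.

Lemma ord_probE (pi' : policyM' R m Om) j (w : Om j) E s :
  ord_prob pi' w E s = oprob (pi' j w) E s.
Proof. by elim: s E => [|i s IH] E //=; rewrite IH. Qed.

Lemma phi_adist (pi' : policyM' R m Om) (hv : valid_policyM' pi') j (w : Om j) e :
  phi pi' w e = adist (pi' j w) m.+1 (e, true).
Proof.
rewrite adist_final; last by move=> E i iE; case: (hv j w E) => _ H; exact: H.
by rewrite /phi; apply: eq_bigr => s _; rewrite ord_probE.
Qed.

Lemma value_from_ext (O : S -> jobs Om -> R) (P Rw : S -> jact n m -> S -> R)
  (sel1 sel2 : jobs Om -> jact n m -> R) :
  (forall w e, sel1 w e = sel2 w e) ->
  forall k s, value_from O P Rw sel1 k s = value_from O P Rw sel2 k s.
Proof.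
move=> H; elim=> [|k IH] s //=.
apply: eq_bigr => w _; congr (_ * _); apply: eq_bigr => e _; rewrite H; congr (_ * _).
by apply: eq_bigr => s' _; rewrite IH.
Qed.

End Connect.

Theorem mainTheorem3 (R : realFieldType) (n m T : nat) (S : finType)
  (Om : 'I_n -> finType)
  (rho : S -> R) (O : S -> jobs Om -> R)
  (P : S -> jact n m -> S -> R) (Rw : S -> jact n m -> S -> R)
  (hn : (0 < n)%N) (hm : (0 < m)%N) (hT : (0 < T)%N)
  (hrho : is_distr rho) (hO : forall s, is_distr (O s))
  (hP : forall s e, is_distr (P s e))
  (pistar : policyM' R m Om) (hstar : valid_policyM' pistar)
  (hopt : forall pi' : policyM' R m Om, valid_policyM' pi' ->
            V_M' O P Rw rho T pi' <= V_M' O P Rw rho T pistar) :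
  forall pi : policyM R m Om, valid_policyM pi ->
    V_M O P Rw rho T pi <= V_M O P Rw rho T (phi pistar).
Proof.
move=> pi hpi.
pose pi' : policyM' R m Om := fun j w => qc (pi j w).
have hv' : valid_policyM' pi'.
  move=> j w E; case: (hpi j w) => ge sm; split; first split.
  - by move=> a; apply: qc_ge0.
  - by apply: qc_sum.
  - by move=> i iE; apply: qc0.
have Veq : forall pi0, valid_policyM' pi0 ->
    V_M' O P Rw rho T pi0 = V_M O P Rw rho T (phi pi0).
  move=> pi0 h; rewrite /V_M' /V_M; apply: eq_bigr => s _; congr (_ * _).
  apply: value_from_ext => w e; rewrite round_prod; apply: eq_bigr => j _.
  by rewrite (phi_adist h).
have phiE : forall j w e, phi pi' w e = pi j w e.
  move=> j w e; case: (hpi j w) => ge sm.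
  rewrite /phi (eq_bigr (fun s => oprob (pi' j w) set0 s)); last by move=> s _; rewrite ord_probE.
  exact: phi_qc.
have -> : V_M O P Rw rho T pi = V_M O P Rw rho T (phi pi').
  rewrite /V_M; apply: eq_bigr => s _; congr (_ * _).
  by apply: value_from_ext => w e; apply: eq_bigr => j _; rewrite phiE.
by rewrite -!Veq //; apply: hopt.
Qed.
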